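(* Let $Q$ be a complete quiver with at least one frozen vertex, and let $\mathbf M=m_1m_2\cdots$ be an infinite mutation sequence which is reduced, weakly balanced and cycle-preserving, and such that $m_1$ is not the apex of a vortex in $Q$. Then $Q$ is eventually sign-coherent on $\mathbf M$: there is $T$ such that $Q^{(j)}_{\mathbf M}$ is sign-coherent for all $j>T$.
   Context: A quiver is a finite directed multigraph with no loops and no oriented 2-cycles, whose vertex set is partitioned into mutable and frozen vertices; arrows between two frozen vertices are ignored. $Q|_S$ is the induced subquiver on $S$. Mutation $\mu_j$ at mutable $j$: for each path $i\to j\to k$ with $a$ arrows $i\to j$ and $b$ arrows $j\to k$ add $ab$ arrows $i\to k$, reverse all arrows at $j$, cancel 2-cycles. A mutation sequence $\mathbf M=m_1m_2\cdots$ is a sequence of mutable vertices; $Q^{(0)}_{\mathbf M}=Q$, $Q^{(i)}_{\mathbf M}=\mu_{m_i}(Q^{(i-1)}_{\mathbf M})$. It is reduced if $m_i\neq m_{i+1}$ for all $i$, and weakly balanced if every mutable vertex occurs infinitely often. Complete: at least one arrow between every pair of vertices at least one of which is mutable. A 3-vertex (sub)quiver is an oriented 3-cycle if it has at most one frozen vertex and its underlying directed graph is not acyclic. A mutable vertex $j$ is cycle-preserving for $Q$ if whenever $Q|_{\{i,j,k\}}$ is an oriented 3-cycle containing $j$, so is $\mu_j(Q)|_{\{i,j,k\}}$; $\mathbf M$ is cycle-preserving if $m_\ell$ is cycle-preserving for $Q^{(\ell-1)}_{\mathbf M}$ for every $\ell\ge1$. A vortex is a quiver on four vertices, at least three mutable,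 in which one vertex (the apex) is a source or sink and the other three support an oriented cycle; $j$ is the apex of a vortex in $Q$ if it is the apex of some 4-vertex induced subquiver that is a vortex. A mutable vertex adjacent to at least one frozen vertex is red (resp. green) if all arrows between it and frozen vertices point towards (resp. away from) it; a quiver is sign-coherent if every mutable vertex is red or green. *)

(* Defs.v *)
From mathcomp Require Import all_boot all_order all_algebra.
Set Implicit Arguments. Unset Strict Implicit. Unset Printing Implicit Defensive.
Import Order.TTheory GRing.Theory Num.Theory.
Local Open Scope ring_scope.

(* A quiver on vertex set 'I_n is encoded by its exchange data:
   b i j = (#arrows i -> j) - (#arrows j -> i).  Since quivers have no
   oriented 2-cycles, the arrows between i and j are recovered from b.
   The set of mutable vertices is [mut]; its complement is the frozen set.
   Arrows between two frozen vertices are ignored by every predicate below. *)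
Definition qmat (n : nat) := 'I_n -> 'I_n -> int.

Definition is_quiver n (b : qmat n) : Prop := forall i j, b i j = - b j i.

Definition arr n (mut : {set 'I_n}) (b : qmat n) (i j : 'I_n) : bool :=
  ((i \in mut) || (j \in mut)) && (0 < b i j).

(* Mutation at j: for paths i -> j -> k with a, b arrows add a*b arrows
   i -> k; reverse arrows at j; cancel 2-cycles (automatic in the net count). *)
Definition mutate n (b : qmat n) (j : 'I_n) : qmat n :=
  fun i k =>
    if (i == j) || (k == j) then - b i k
    else b i k + Num.max 0 (b i j) * Num.max 0 (b j k)
               - Num.max 0 (b k j) * Num.max 0 (b j i).

(* Q^(i)_M, with m_{l+1} = M l. *)
Fixpoint qseq n (b : qmat n) (M : nat -> 'I_n) (l : nat) : qmat n :=
  match l with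
  | 0 => b
  | l'.+1 => mutate (qseq b M l') (M l')
  end.

Definition complete n (mut : {set 'I_n}) (b : qmat n) : Prop :=
  forall i j, i != j -> (i \in mut) || (j \in mut) -> b i j != 0.

Definition has_cycle_in n (mut : {set 'I_n}) (b : qmat n) (S : {set 'I_n}) : Prop :=
  exists s : seq 'I_n, [/\ s != [::], all (fun x => x \in S) s & cycle (arr mut b) s].

Definition oriented_3cycle n (mut : {set 'I_n}) (b : qmat n) (S : {set 'I_n}) : Prop :=
  [/\ #|S| = 3%N, (#|S :\: mut| <= 1)%N & has_cycle_in mut b S].

Definition cycle_preserving_vertex n (mut : {set 'I_n}) (b : qmat n) (j : 'I_n) : Prop :=
  j \in mut /\
  forall i k : 'I_n, oriented_3cycle mut b [set i; j; k] ->
                     oriented_3cycle mut (mutate b j) [set i; j; k].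

Definition vortex_apex n (mut : {set 'I_n}) (b : qmat n) (a : 'I_n) : Prop :=
  exists S : {set 'I_n},
    [/\ #|S| = 4%N, a \in S, (3 <= #|S :&: mut|)%N,
        (forall x, x \in S -> ~~ arr mut b x a) \/ (forall x, x \in S -> ~~ arr mut b a x)
      & has_cycle_in mut b (S :\ a)].

Definition adj_frozen n (mut : {set 'I_n}) (b : qmat n) (i : 'I_n) : Prop :=
  exists f, f \notin mut /\ b i f != 0.

Definition red n (mut : {set 'I_n}) (b : qmat n) (i : 'I_n) : Prop :=
  [/\ i \in mut, adj_frozen mut b i & forall f, f \notin mut -> ~~ arr mut b i f].

Definition green n (mut : {set 'I_n}) (b : qmat n) (i : 'I_n) : Prop :=
  [/\ i \in mut, adj_frozen mut b i & forall f, f \notin mut -> ~~ arr mut b f i].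

Definition sign_coherent n (mut : {set 'I_n}) (b : qmat n) : Prop :=
  forall i, i \in mut -> adj_frozen mut b i -> red mut b i \/ green mut b i.

(* Main.v *)
Require Import Defs.
From mathcomp Require Import all_boot all_order all_algebra.
From mathcomp Require Import zify.
Import Order.TTheory GRing.Theory Num.Theory.

Section Aux.
Local Open Scope ring_scope.
Variables (n : nat) (mut : {set 'I_n}).

Definition pp (b : qmat n) (x y : 'I_n) : bool := 0 < b x y.

Lemma card3 (a b c : 'I_n) : a != b -> b != c -> a != c -> #|[set a; b; c]| = 3%N.
Proof. move=> ab bc ac. rewrite setUC cardsU1 cards2 !inE ab.
rewrite eq_sym (negbTE ac) eq_sym (negbTE bc). done. Qed.

Lemma inS3 (a b c x : 'I_n) : (x \in [set a; b; c]) = [|| x == a, x == b | x == c].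
Proof. by rewrite !inE -orbA. Qed.

Lemma no_cycle (b : qmat n) (S : {set 'I_n}) (r : 'I_n -> nat) :
  (forall x y, x \in S -> y \in S -> arr mut b x y -> (r x < r y)%N) ->
  ~ has_cycle_in mut b S.
Proof.
move=> hr [[|x p] [//= _ hall hc]].
have key : forall q y, y \in S -> all (fun z => z \in S) q ->
    path (arr mut b) y q -> q != [::] -> (r y < r (last y q))%N.
  elim=> [//|z q IH] y yS /= /andP[zS qS] /andP[eyz pq] _.
  have ryz := hr _ _ yS zS eyz.
  case: q IH qS pq => [|w q] IH qS pq; first by [].
  exact: ltn_trans ryz (IH z zS qS pq isT).
move: hall => /= /andP[xS pS].
have h := key (rcons p x) x xS.
rewrite all_rcons xS pS last_rcons ltnn in h.
suff ne : rcons p x != [::] by have := h isT hc ne.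
by case: (p).
Qed.

Lemma skew0 (b : qmat n) x : is_quiver b -> b x x = 0.
Proof. move=> q; have := q x x; lia. Qed.

Lemma mutate_quiver (b : qmat n) j : is_quiver b -> is_quiver (mutate b j).
Proof.
move=> q i k; rewrite /mutate.
case hij: (i == j); case hkj: (k == j) => /=; rewrite ?(q i k) ?opprK //.
rewrite (q k i) (q i j) (q j k) (q k j) (q j i). lia.
Qed.
Arguments mutate_quiver [b j].


Lemma acyc3 (b : qmat n) (S : {set 'I_n}) (a c d : 'I_n) :
  is_quiver b -> a != c -> c != d -> a != d ->
  (forall x, x \in S -> [|| x == a, x == c | x == d]) ->
  ~~ arr mut b c a -> ~~ arr mut b d a -> ~~ arr mut b d c ->
  ~ has_cycle_in mut b S.
Proof.
move=> q ac cd ad hS h1 h2 h3.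
pose r x := if x == a then 0%N else if x == c then 1%N else 2%N.
apply: (@no_cycle b S r) => x y xS yS.
have ca : c != a by rewrite eq_sym.
have dc : d != c by rewrite eq_sym.
have da : d != a by rewrite eq_sym.
case/or3P: (hS x xS) => /eqP ->; case/or3P: (hS y yS) => /eqP ->;
  rewrite /r ?eqxx ?(negbTE ca) ?(negbTE dc) ?(negbTE da) //;
  try (by rewrite /arr skew0 // ltxx andbF);
  by move=> h; rewrite h in h1 h2 h3.
Qed.

Lemma o3 (b : qmat n) i j k : j \in mut -> i != j -> j != k -> i != k ->
  (i \in mut) || (k \in mut) ->
  has_cycle_in mut b [set i; j; k] -> oriented_3cycle mut b [set i; j; k].
Proof.
move=> jm ij jk ik ikm hc; split => //; first exact: card3.
case/orP: ikm => hm.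
- apply: (leq_trans (subset_leq_card (_ : _ \subset [set k]))); last by rewrite cards1.
  apply/subsetP => x; rewrite in_setD inS3 => /andP[xm /or3P[] /eqP ex]; rewrite ?inE ex ?eqxx //;
  by rewrite ex ?hm ?jm in xm.
- apply: (leq_trans (subset_leq_card (_ : _ \subset [set i]))); last by rewrite cards1.
  apply/subsetP => x; rewrite in_setD inS3 => /andP[xm /or3P[] /eqP ex]; rewrite ?inE ex ?eqxx //;
  by rewrite ex ?hm ?jm in xm.
Qed.


Definition rulev (b : qmat n) j i k : bool :=
  if pp b i j && pp b j k then true else if pp b j i && pp b k j then false else pp b i k.

Lemma mutate_at (b : qmat n) j x y : (x == j) || (y == j) -> mutate b j x y = - b x y.
Proof. by rewrite /mutate => ->. Qed.

Lemma rule (b : qmat n) j i k : is_quiver b -> complete mut b -> cycle_preserving_vertex mut b j ->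
  i != j -> k != j -> i != k -> (i \in mut) || (k \in mut) ->
  mutate b j i k != 0 /\ pp (mutate b j) i k = rulev b j i k.
Proof.
move=> q c [jm cp] ij kj ik ikm.
have xnz : b i j != 0 by apply: c => //; rewrite jm orbT.
have ynz : b j k != 0 by apply: c; rewrite ?jm // eq_sym.
have znz : b i k != 0 by apply: c.
have jk : j != k by rewrite eq_sym.
have e : mutate b j i k = b i k + Num.max 0 (b i j) * Num.max 0 (b j k)
                            - Num.max 0 (b k j) * Num.max 0 (b j i).
  by rewrite /mutate (negbTE ij) (negbTE kj).
have qm : is_quiver (mutate b j) by apply: mutate_quiver.
have b'ij : mutate b j i j = - b i j by rewrite mutate_at // eqxx orbT.
have b'jk : mutate b j j k = - b j k by rewrite mutate_at // eqxx.
have b'ki : mutate b j k i = - mutate b j i k by apply: qm.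
have b'ji : mutate b j j i = b i j by rewrite mutate_at ?eqxx // -q.
have b'kj : mutate b j k j = b j k by rewrite mutate_at ?eqxx ?orbT // -q.
have b'ik : mutate b j i k = - mutate b j k i by apply: qm.
have jmt : forall x, (x \in mut) || (j \in mut) by move=> x; rewrite jm orbT.
have mjt : forall x, (j \in mut) || (x \in mut) by move=> x; rewrite jm.
have qji := q j i. have qkj := q k j. have qki := q k i.
have S3 : forall x, x \in [set i; j; k] -> [|| x == i, x == j | x == k] by move=> x; rewrite inS3.
rewrite /rulev /pp.
have [xp|xn] : 0 < b i j \/ b i j < 0 by lia.
- have [yp|yn] : 0 < b j k \/ b j k < 0 by lia.
  + rewrite xp yp /=.
    have [zp|zn] : 0 < b i k \/ b i k < 0 by lia.
    * have h : 0 < mutate b j i k by rewrite e; nia.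
      by split => //; rewrite gt_eqF.
    * have hc : has_cycle_in mut b [set i; j; k].
        exists [:: i; j; k]; split => //; first by rewrite /= !inS3 !eqxx ?orbT.
        by rewrite /= /arr jmt mjt xp yp orbC ikm qki oppr_gt0 zn.
      have h : 0 < mutate b j i k.
        case: (ltrP 0 (mutate b j i k)) => // hle; exfalso.
        have [_ _ hc'] := cp i k (@o3 b i j k jm ij jk ik ikm hc).
        apply: (@acyc3 _ _ _ _ _ qm kj (_ : j != i) (_ : k != i) _ _ _ _ hc').
        - by rewrite eq_sym.
        - by rewrite eq_sym.
        - by move=> x /S3 /or3P[] ->; rewrite ?orbT.
        - by rewrite /arr b'jk; apply/negP => /andP[_ hh]; lia.
        - by rewrite /arr; apply/negP => /andP[_ hh]; lia.
        - by rewrite /arr b'ij; apply/negP => /andP[_ hh]; lia.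
      by split => //; rewrite gt_eqF.
  + have e1 : (0 < b j k) = false by lia.
    have e2 : (0 < b j i) = false by lia.
    rewrite e1 e2 andbF /=.
    have ez : mutate b j i k = b i k by rewrite e; nia.
    by rewrite ez.
- have e1 : (0 < b i j) = false by lia.
  have e2 : (0 < b j i) = true by lia.
  rewrite e1 e2 /=.
  have [yp|yn] : 0 < b j k \/ b j k < 0 by lia.
  + have e3 : (0 < b k j) = false by lia.
    rewrite e3 /=.
    have ez : mutate b j i k = b i k by rewrite e; nia.
    by rewrite ez.
  + have e3 : (0 < b k j) = true by lia.
    rewrite e3 /=.
    have [zp|zn] : 0 < b i k \/ b i k < 0 by lia.
    * have hc : has_cycle_in mut b [set i; j; k].
        exists [:: k; j; i]; split => //; first by rewrite /= !inS3 !eqxx ?orbT.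
        rewrite /= /arr jmt mjt e2 e3 zp /= andbT.
        by rewrite ikm.
      have h : mutate b j i k < 0.
        case: (ltrP (mutate b j i k) 0) => // hle; exfalso.
        have [_ _ hc'] := cp i k (@o3 b i j k jm ij jk ik ikm hc).
        apply: (@acyc3 _ _ _ _ _ qm ij jk ik _ _ _ _ hc').
        - by move=> x /S3.
        - by rewrite /arr b'ji; apply/negP => /andP[_ hh]; lia.
        - by rewrite /arr b'ki; apply/negP => /andP[_ hh]; lia.
        - by rewrite /arr b'kj; apply/negP => /andP[_ hh]; lia.
      split; first by rewrite lt_eqF.
      by apply/negbTE; rewrite -leNgt ltW.
    * have h : mutate b j i k < 0 by rewrite e; nia.
      split; first by rewrite lt_eqF.
      by apply/negbTE; rewrite -leNgt ltW.
Qed.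
Arguments rule [b j i k].


Lemma pp_neg (b : qmat n) x y : is_quiver b -> complete mut b -> x != y ->
  (x \in mut) || (y \in mut) -> pp b y x = ~~ pp b x y.
Proof.
move=> q c xy m; have := c x y xy m; rewrite /pp (q y x) => h; lia.
Qed.
Arguments pp_neg [b x y].


Lemma rule_j1 (b : qmat n) j x : is_quiver b -> pp (mutate b j) x j = pp b j x.
Proof. by move=> q; rewrite /pp mutate_at ?eqxx ?orbT // -q. Qed.
Arguments rule_j1 [b j x].


Lemma rule_j2 (b : qmat n) j x : is_quiver b -> pp (mutate b j) j x = pp b x j.
Proof. by move=> q; rewrite /pp mutate_at ?eqxx // -q. Qed.
Arguments rule_j2 [b j x].


Lemma complete_mutate (b : qmat n) j : is_quiver b -> complete mut b ->
  cycle_preserving_vertex mut b j -> complete mut (mutate b j).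
Proof.
move=> q c cpv i k ik m.
case h: ((i == j) || (k == j)).
  by rewrite mutate_at // oppr_eq0; apply: c.
move/negbT: h; rewrite negb_or => /andP[ij kj].
by case: (rule q c cpv ij kj ik m).
Qed.
Arguments complete_mutate [b j].


Lemma step_gen (s : qmat n) j v x : is_quiver s -> complete mut s ->
  cycle_preserving_vertex mut s j -> v != j -> x != j -> v != x -> v \in mut ->
  pp (mutate s j) v x = if pp s v j && pp s j x then true
                        else if ~~ pp s v j && ~~ pp s j x then false else pp s v x.
Proof.
move=> q c cpv vj xj vx vm.
have jm : j \in mut by case: cpv.
have [_ ->] := rule q c cpv vj xj vx (introT orP (or_introl vm)).
rewrite /rulev (pp_neg q c vj) ?vm // (pp_neg q c (_ : j != x)) ?jm //.
by rewrite eq_sym.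
Qed.
Arguments step_gen [s j v x].


Lemma step_w (s0 : qmat n) w j x : is_quiver s0 -> complete mut s0 ->
  cycle_preserving_vertex mut s0 w ->
  cycle_preserving_vertex mut (mutate s0 w) j -> j != w -> x != w -> x != j ->
  pp (mutate (mutate s0 w) j) w x = pp (mutate s0 w) w j.
Proof.
move=> q0 c0 cw cj jw xw xj.
have wm : w \in mut by case: cw.
have jm : j \in mut by case: cj.
set s := mutate s0 w.
have q : is_quiver s by apply: mutate_quiver.
have c : complete mut s by apply: complete_mutate.
have AB : forall a e, a != w -> e != w -> a != e -> (a \in mut) || (e \in mut) ->
    pp s w a -> pp s e w -> pp s a e.
  move=> a e aw ew ae m h1 h2.
  have [_ ->] := rule q0 c0 cw aw ew ae m.
  by rewrite /rulev -(@rule_j2 s0 w a q0) -(@rule_j1 s0 w e q0) -/s h1 h2.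
have wj : w != j by rewrite eq_sym.
have wx : w != x by rewrite eq_sym.
rewrite (step_gen q c cj wj xj wx wm).
have hjx := pp_neg q c xj (introT orP (or_intror jm)).
have hxw := pp_neg q c xw (introT orP (or_intror wm)).
have hjw := pp_neg q c wj (introT orP (or_introl wm)).
have jx : j != x by rewrite eq_sym.
case Hwj: (pp s w j); case Hwx: (pp s w x); case Hjx: (pp s j x) => //=.
- have hxw' : pp s x w by move: hxw; rewrite Hwx; case: (pp s x w).
  have := AB j x jw xw jx (introT orP (or_introl jm)) Hwj hxw'.
  by rewrite Hjx.
- have hjw' : pp s j w by rewrite hjw Hwj.
  have := AB x j xw jw xj (introT orP (or_intror jm)) Hwx hjw'.
  by move: hjx; rewrite Hjx; case: (pp s x j).
Qed.

End Aux.
Arguments pp {n}.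
Arguments pp_neg {n mut b x y}.
Arguments rule_j1 {n b j x}.
Arguments rule_j2 {n b j x}.
Arguments mutate_quiver {n b j}.
Arguments complete_mutate {n mut b j}.
Arguments step_gen {n mut s j v x}.
Arguments step_w {n mut s0 w j x}.

Theorem mainTheorem14 (n : nat) (mut : {set 'I_n}) (b : qmat n)
  (M : nat -> 'I_n) :
  is_quiver b ->
  complete mut b ->
  (exists f : 'I_n, f \notin mut) ->
  (forall l, M l \in mut) ->
  (forall l, M l != M l.+1) ->
  (forall v, v \in mut -> forall N, exists k, (N <= k)%N /\ M k = v) ->
  (forall l, cycle_preserving_vertex mut (qseq b M l) (M l)) ->
  ~ vortex_apex mut b (M 0%N) ->
  exists T : nat, forall j : nat, (T < j)%N -> sign_coherent mut (qseq b M j).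
Proof.
move=> qb cb _ Mm Mred Mbal Mcp _.
have qS : forall l, is_quiver (qseq b M l) /\ complete mut (qseq b M l).
  elim=> [|l [h1 h2]] //=; split; [exact: mutate_quiver | exact: complete_mutate].
pose old l v := exists i, (i.+2 <= l)%N /\ M i = v.
pose unseen l u := forall i, (i < l)%N -> M i != u.
have inv : forall l v, old l v -> exists d,
    (forall f, f \notin mut -> pp (qseq b M l) v f = d) /\
    (forall u, u \in mut -> unseen l u -> pp (qseq b M l) v u = d).
  elim=> [|l IH] v [i [hi Mi]]; first by [].
  have vm : v \in mut by rewrite -Mi.
  have uns : forall u, unseen l.+1 u -> unseen l u /\ u != M l.
    move=> u h; split; last by rewrite eq_sym; exact: h l (ltnSn l).
    by move=> k kl; apply: (h k); exact: leqW.
  have unv : forall u, unseen l.+1 u -> u != v.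
    by move=> u h; rewrite eq_sym -Mi; apply: (h i); lia.
  have fmv : forall f, f \notin mut -> f != v.
    by move=> f fm; apply: contraNneq fm => ->.
  have fmj : forall f, f \notin mut -> f != M l.
    by move=> f fm; apply: contraNneq fm => ->; exact: Mm.
  have [hlt|heq] : (i.+2 <= l)%N \/ i.+1 = l by lia.
  - have [d [hf hu]] := IH v (ex_intro _ i (conj hlt Mi)).
    have [qs cs] := qS l.
    have cj := Mcp l.
    have jm := Mm l.
    change (exists d, (forall f, f \notin mut -> pp (mutate (qseq b M l) (M l)) v f = d) /\
      (forall u, u \in mut -> unseen l.+1 u -> pp (mutate (qseq b M l) (M l)) v u = d)).
    case vj: (v == M l).
    + move/eqP: vj => vj; exists (~~ d); split.
      * move=> f fm; rewrite vj rule_j2 // (pp_neg qs cs) ?jm //; last by rewrite eq_sym fmj.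
        by rewrite -vj hf.
      * move=> u um /uns [uu uj]; rewrite vj rule_j2 // (pp_neg qs cs) ?jm //; last by rewrite eq_sym.
        by rewrite -vj hu.
    + move/negbT: vj => vj.
      case: (boolP [exists k : 'I_l, M k == M l]).
      * move/existsP => [k /eqP Mk].
        have kl : (k.+2 <= l)%N.
          have := ltn_ord k; rewrite leq_eqVlt => /orP[/eqP hk|//].
          by have := Mred k; rewrite hk Mk eqxx.
        have [e [ef eu]] := IH (M l) (ex_intro _ (nat_of_ord k) (conj kl Mk)).
        exists (if pp (qseq b M l) v (M l) && e then true
                else if ~~ pp (qseq b M l) v (M l) && ~~ e then false else d); split.
        - move=> f fm; rewrite (step_gen qs cs cj vj (fmj f fm)) ?(ef f fm) ?(hf f fm) //.
          by rewrite eq_sym fmv.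
        - move=> u um hu1; have [uu uj] := uns u hu1.
          rewrite (step_gen qs cs cj vj uj) ?(eu u um uu) ?(hu u um uu) //.
          by rewrite eq_sym unv.
      * move=> nj.
        have uj : unseen l (M l).
          move=> k kl; apply/negP => /eqP h; apply: (negP nj); apply/existsP.
          by exists (Ordinal kl); rewrite h.
        have hvj := hu (M l) jm uj.
        exists d; split.
        - move=> f fm; rewrite (step_gen qs cs cj vj (fmj f fm)) ?(hf f fm) ?hvj //; last by rewrite eq_sym fmv.
          by case: d {hf hu hvj}; case: (pp _ _ _).
        - move=> u um hu1; have [uu uj'] := uns u hu1.
          rewrite (step_gen qs cs cj vj uj') ?(hu u um uu) ?hvj //; last by rewrite eq_sym unv.
          by case: d {hf hu hvj}; case: (pp _ _ _).
  - subst l.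
    have [q0 c0] := qS i.
    change (exists d, (forall f, f \notin mut -> pp (mutate (mutate (qseq b M i) (M i)) (M i.+1)) v f = d) /\
      (forall u, u \in mut -> unseen i.+2 u -> pp (mutate (mutate (qseq b M i) (M i)) (M i.+1)) v u = d)).
    have jw : M i.+1 != M i by rewrite eq_sym Mred.
    exists (pp (mutate (qseq b M i) (M i)) (M i) (M i.+1)); rewrite -Mi; split.
    + move=> f fm; apply: (step_w q0 c0 (Mcp i) (Mcp i.+1) jw); rewrite ?Mi ?fmv ?fmj //.
    + move=> u um hu1; have [_ uj] := uns u hu1.
      apply: (step_w q0 c0 (Mcp i) (Mcp i.+1) jw); rewrite ?Mi ?unv //.
have fin : forall s : seq 'I_n, exists T, forall v, v \in s -> v \in mut -> old T v.
  elim=> [|a s [T hT]]; first by exists 0%N.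
  case am: (a \in mut).
  - have [k [_ Mk]] := Mbal a am 0%N.
    exists (maxn T k.+2) => v; rewrite inE => /orP[/eqP -> _|vs vm].
    + by exists k; split => //; exact: leq_maxr.
    + have [i [hi Mi]] := hT v vs vm; exists i; split => //.
      exact: leq_trans hi (leq_maxl _ _).
  - exists T => v; rewrite inE => /orP[/eqP -> |vs vm]; [by rewrite am | exact: hT].
have [T hT] := fin (enum 'I_n).
exists T => l Tl i im adj.
have [i0 [hi Mi]] := hT i (mem_enum _ i) im.
have [d [hd _]] := inv l i (ex_intro _ i0 (conj (leq_trans hi (ltnW Tl)) Mi)).
case: d hd => hd.
- right; split => // f fm; rewrite /arr; apply/negP => /andP[_ h].
  have := hd f fm; rewrite /pp (proj1 (qS l) f i) in h * => hh; lia.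
- left; split => // f fm; rewrite /arr; apply/negP => /andP[_ h].
  by have := hd f fm; rewrite /pp h.
Qed.
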